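(* Let $\mathcal{L}$ be a Prob-solvable loop with guard polynomial $G$, and let $E_i:=\mathbb{E}(-G_{i+1}+G_i\mid\mathcal{F}_i)$. Suppose: (i) $u$ is an upper bounding function for $E$ and there exist $\kappa>0$ and $i_1$ with $u(i)\le-\kappa$ for all $i\ge i_1$; (ii) $\mathbb{P}(\mathit{Guard}_i)>0$ for every $i\in\mathbb{N}$; (iii) for every branch $B$ of $-G$ there is an absolute bounding function $c_B$ for the expression $B+G$, and there are a constant $C$ and $i_2$ with $c_B(i)\le C$ for all branches $B$ and all $i\ge i_2$. Then $M:=-G$ satisfies the conditions of the relaxed Repulsing-AST-rule: there exist $i_0\in\mathbb{N}$, $\epsilon>0$, $c>0$ with $\mathbb{P}(M_{i_0}<0)>0$ and, for all $i\ge i_0$ almost surely, $\neg\mathit{Guard}_i\implies M_i\ge0$, $\mathit{Guard}_i\implies\mathbb{E}(M_{i+1}-M_i\mid\mathcal{F}_i)\le-\epsilon$, and $|M_{i+1}-M_i|<c$. Consequently $\mathcal{L}$ is not AST.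
   Context: A Prob-solvable loop $\mathcal{L}$ with real-valued variables $x_{(1)},\dots,x_{(m)}$ consists of an initialization $x_{(j)}:=r_{(j)}\in\mathbb{R}$, a guard $P>Q$ with $P,Q$ real polynomials, and a loop body that, for $j=1,\dots,m$ in order, sets $x_{(j)}$ to $a_{(jk)}x_{(j)}+P_{(jk)}$ with probability $p_{jk}$ ($k<l_j$) or to the last alternative with the remaining probability (independent choices), where $a_{(jk)}\ge0$, $P_{(jk)}\in\mathbb{R}[x_{(1)},\dots,x_{(j-1)}]$ evaluated at already-updated values, $p_{jk}\in[0,1]$, $\sum_k p_{jk}<1$. $G:=P-Q$. The loop space $(\Omega,\Sigma,(\mathcal{F}_i),\mathbb{P})$: $\Omega=(\mathbb{R}^m)^\omega$, $\mathcal{F}_i$ generated by cylinder sets of prefixes of length $i+1$; under $\mathbb{P}$ the first state is the initial state and each next state results from one execution of the body if the guard holds, otherwise it repeats the current state. $E_i(\vartheta):=E(\vartheta_i)$; $\mathit{Guard}_i$ is the event $G_i>0$; $T:=\inf\{i:G_i\le0\}$; $\mathcal{L}$ is AST if $\mathbb{P}(T<\infty)=1$. Branches: for a polynomial $H$, each choice vector $\kappa$ of alternatives gives a polynomial $B_\kappa$ with $H(s')=B_\kappa(s)$ when the body is executed from $s$ with these choices, with probability the product of the chosen alternatives' probabilities; the branches of $H$ are the polynomials $B$ whose total probability (summed over $\kappa$ with $B_\kappa=B$) is positive. An upper bounding function for an expression $E$ is a monotone $u:\mathbb{N}\to\mathbb{R}$, everywhere non-negative or everywhere non-positive, such that for some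 $\alpha>0$ and all sufficiently large $i$, $\mathbb{P}(E_i\le\alpha\,u(i)\mid T>i)=1$. An absolute bounding function for $E$ is an upper bounding function for $|E|$. *)

(* Defs.v *)
From mathcomp Require Import all_boot all_order all_algebra.
From mathcomp Require Import reals.
From mathcomp Require Import mpoly.



Unset Printing Implicit Defensive.

Import Order.TTheory GRing.Theory Num.Theory.
Local Open Scope ring_scope.

(* For variable j there are [nalt j] = l_j alternatives; alternative k sets  *)
(*   x_(j) := acoef j k * x_(j) + upd j k                                    *)
(* with probability [prb j k] if k < l_j - 1, and the last alternative gets  *)
(* the remaining probability.                                                *)
Record loop (R : realType) (m : nat) := Loop {
  init  : 'I_m -> R;
  gP    : {mpoly R[m]};
  gQ    : {mpoly R[m]};
  nalt  : 'I_m -> nat;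
  acoef : forall j : 'I_m, 'I_(nalt j) -> R;
  upd   : forall j : 'I_m, 'I_(nalt j) -> {mpoly R[m]};
  prb   : forall j : 'I_m, 'I_(nalt j) -> R }.

Arguments init {R m} _ _.
Arguments gP {R m} _.
Arguments gQ {R m} _.
Arguments nalt {R m} _ _.
Arguments acoef {R m} _ j _.
Arguments upd {R m} _ j _.
Arguments prb {R m} _ j _.

Section Loop.
Variables (R : realType) (m : nat) (L : loop R m).

Definition altprob (j : 'I_m) (k : 'I_(nalt L j)) : R :=
  if (k.+1 < nalt L j)%N then prb L j k
  else 1 - \sum_(k' < nalt L j | (k'.+1 < nalt L j)%N) prb L j k'.

Definition only_vars_below (j : nat) (p : {mpoly R[m]}) : Prop :=
  forall mon, mon \in msupp p -> forall i : 'I_m, (j <= i)%N -> mon i = 0%N.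

Definition prob_solvable : Prop :=
  [/\ forall j, (0 < nalt L j)%N,
      forall j k, 0 <= acoef L j k,
      forall j (k : 'I_(nalt L j)), (k.+1 < nalt L j)%N -> 0 <= prb L j k <= 1,
      forall j, \sum_(k' < nalt L j | (k'.+1 < nalt L j)%N) prb L j k' < 1
    & forall (j : 'I_m) k, only_vars_below j (upd L j k)].

Definition G : {mpoly R[m]} := gP L - gQ L.

Definition state := {ffun 'I_m -> R}.
Definition evalp (p : {mpoly R[m]}) (s : state) : R := meval (fun i => s i) p.

Definition choice := {dffun forall j : 'I_m, 'I_(nalt L j)}.
Definition kprob (kap : choice) : R := \prod_(j < m) altprob j (kap j).

Fixpoint exec_upto (kap : choice) (n : nat) (s : state) : state :=
  match n with
  | 0%N => s
  | n'.+1 =>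
      let s' := exec_upto kap n' s in
      match (insub n' : option 'I_m) with
      | Some j => [ffun i => if i == j
                             then acoef L j (kap j) * s' j + evalp (upd L j (kap j)) s'
                             else s' i]
      | None => s'
      end
  end.

Definition body (kap : choice) (s : state) : state := exec_upto kap m s.

(* symbolic execution: the updated variables as polynomials in the old ones *)
Fixpoint sym_upto (kap : choice) (n : nat) : m.-tuple {mpoly R[m]} :=
  match n with
  | 0%N => [tuple 'X_i | i < m]
  | n'.+1 =>
      let t := sym_upto kap n' in
      match (insub n' : option 'I_m) with
      | Some j => [tuple if i == j
                         then (acoef L j (kap j))%:MP * tnth t j
                              + (upd L j (kap j) \mPo t)
                         else tnth t i | i < m]
      | None => t
      end
  end.

(* B_kappa for a polynomial H: H(s') = B_kappa(s) *)
Definition branch_poly (kap : choice) (H : {mpoly R[m]}) : {mpoly R[m]} :=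
  H \mPo sym_upto kap m.

Definition is_branch (H B : {mpoly R[m]}) : Prop :=
  0 < \sum_(kap : choice | branch_poly kap H == B) kprob kap.

(* The loop space.  A run prefix of length n+1 (states 0..n) is determined  *)
(* by the n choice vectors used in the first n iterations; its probability   *)
(* is the product of their probabilities.  When the guard fails the state is *)
(* repeated.  Events / random variables measurable w.r.t. F_n are functions  *)
(* of the prefix (a seq of n+1 states).                                      *)
Definition s0 : state := [ffun i => init L i].

Definition step (kap : choice) (s : state) : state :=
  if 0 < evalp G s then body kap s else s.

Fixpoint final (s : state) (ks : seq choice) : state :=
  match ks with
  | [::] => s
  | k :: ks' => final (step k s) ks'
  end.

Definition run (ks : seq choice) : seq state :=
  [seq final s0 (take t ks) | t <- iota 0 (size ks).+1].

Definition st (r : seq state) (i : nat) : state := nth s0 r i.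

Definition weight (ks : seq choice) : R := \prod_(k <- ks) kprob k.

(* P(A) for an event A in F_n, A given as a predicate on prefixes of length n+1 *)
Definition prob (n : nat) (A : seq state -> bool) : R :=
  \sum_(ks : n.-tuple choice) weight ks * (A (run ks))%:R.

Definition condprob (n : nat) (A B : seq state -> bool) : R :=
  prob n (fun r => A r && B r) / prob n B.

(* E(Y | F_n), for Y in F_(n+1), evaluated on the F_n-atom given by the
   prefix r (states 0..n) *)
Definition condexp (n : nat) (Y : seq state -> R) (r : seq state) : R :=
  (\sum_(ks : n.+1.-tuple choice | take n.+1 (run ks) == r)
      weight ks * Y (run ks)) / prob n (fun r' => r' == r).

Definition guard (i : nat) (r : seq state) : bool := 0 < evalp G (st r i).
Definition T_gt (i : nat) (r : seq state) : bool := all (fun j => guard j r) (iota 0 i.+1).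
Definition T_le (i : nat) (r : seq state) : bool := has (fun j => ~~ guard j r) (iota 0 i.+1).

(* AST: P(T < oo) = 1, where P(T < oo) = lim_i P(T <= i) *)
Definition AST : Prop :=
  forall e : R, 0 < e -> exists N : nat, forall i : nat, (N <= i)%N ->
    1 - e < prob i (T_le i).

(* An expression E is a family (E i) of F_i-measurable random variables *)
Definition upper_bounding (E : nat -> seq state -> R) (u : nat -> R) : Prop :=
  [/\ {homo u : x y / (x <= y)%N >-> x <= y} \/ {homo u : x y / (x <= y)%N >-> y <= x},
      (forall i, 0 <= u i) \/ (forall i, u i <= 0)
    & exists2 alpha : R, 0 < alpha &
        exists N : nat, forall i : nat, (N <= i)%N ->
          condprob i (fun r => E i r <= alpha * u i) (T_gt i) = 1].

Definition absolute_bounding (E : nat -> seq state -> R) (c : nat -> R) : Prop :=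
  upper_bounding (fun i r => `|E i r|) c.

Definition Eexp (i : nat) (r : seq state) : R :=
  condexp i (fun r' => - evalp G (st r' i.+1) + evalp G (st r' i)) r.

End Loop.

Arguments altprob {R m} L j k.
Arguments only_vars_below {R m} j p.
Arguments prob_solvable {R m} L.
Arguments G {R m} L.
Arguments state {R} m.
Arguments evalp {R m} p s.
Arguments choice {R m} L.
Arguments kprob {R m} L kap.
Arguments exec_upto {R m} L kap n s.
Arguments body {R m} L kap s.
Arguments sym_upto {R m} L kap n.
Arguments branch_poly {R m} L kap H.
Arguments is_branch {R m} L H B.
Arguments s0 {R m} L.
Arguments step {R m} L kap s.
Arguments final {R m} L s ks.
Arguments run {R m} L ks.
Arguments st {R m} L r i.
Arguments weight {R m} L ks.
Arguments prob {R m} L n A.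
Arguments condprob {R m} L n A B.
Arguments condexp {R m} L n Y r.
Arguments guard {R m} L i r.
Arguments T_gt {R m} L i r.
Arguments T_le {R m} L i r.
Arguments AST {R m} L.
Arguments upper_bounding {R m} L E u.
Arguments absolute_bounding {R m} L E c.
Arguments Eexp {R m} L i r.

(* Main.v *)
Require Import Defs.
From mathcomp Require Import all_boot all_order all_algebra.
From mathcomp Require Import reals.
From mathcomp Require Import mpoly.
From mathcomp.algebra_tactics Require Import ring lra.
Import Order.TTheory GRing.Theory Num.Theory.
Local Open Scope ring_scope.
Set Implicit Arguments.
Unset Strict Implicit.


Lemma prod_sum_dffun (R : comNzRingType) (I : finType) (T_ : I -> finType)
  (P : forall i, T_ i -> R) :
  \prod_(i : I) \sum_(j : T_ i) P i j =
  \sum_(f : {dffun forall i : I, T_ i}) \prod_(i : I) P i (f i).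
Proof.
pose P_ i := [ffun j : T_ i => P i j].
transitivity (\prod_(i : I) \sum_(j in tagged_with T_ i) untag 0 (P_ i) j).
  apply: eq_bigr => i _; rewrite -(big_tag P_).
  by apply: eq_bigr => j _; rewrite ffunE.
rewrite bigA_distr_big_dep -big_fprod.
rewrite (reindex (@fprod_of_dffun I T_)); last first.
  by apply/onW_bij/fprod_of_dffun_bij.
apply: eq_bigr => f _; apply: eq_bigr => i _.
by rewrite ffunE /fprod_of_dffun fprodE.
Qed.

Lemma sum_tuple_cons (R : nmodType) (T : finType) n (F : seq T -> R) :
  \sum_(t : n.+1.-tuple T) F t = \sum_(x : T) \sum_(t : n.-tuple T) F (x :: t).
Proof.
rewrite pair_big /=.
rewrite (reindex (fun p : T * n.-tuple T => [tuple of p.1 :: p.2])) /=; last first.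
  exists (fun t : n.+1.-tuple T => (thead t, [tuple of behead t])).
    move=> [x t] /=; have -> : [tuple of behead (x :: t)] = t by apply: val_inj. by [].
  move=> t _; apply: val_inj => /=; case: t => -[|x s] //=.
by apply: eq_bigr => -[x t].
Qed.

Lemma sum_tuple0 (R : nmodType) (T : finType) (F : seq T -> R) :
  \sum_(t : 0.-tuple T) F t = F [::].
Proof.
rewrite (big_pred1 [tuple]) // => t /=; apply/esym/eqP; exact: tuple0.
Qed.

Lemma sum_tuple_rcons (R : nmodType) (T : finType) n (F : seq T -> R) :
  \sum_(t : n.+1.-tuple T) F t = \sum_(t : n.-tuple T) \sum_(x : T) F (rcons t x).
Proof.
elim: n F => [|n IH] F.
  rewrite sum_tuple_cons (@sum_tuple0 _ _ (fun s => \sum_x F (rcons s x))).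
  by apply: eq_bigr => x _; exact: (@sum_tuple0 _ _ (fun s => F (x :: s))).
rewrite sum_tuple_cons (@sum_tuple_cons _ _ _ (fun t => \sum_x F (rcons t x))).
apply: eq_bigr => x _; rewrite (IH (fun s => F (x :: s))).
by [].
Qed.

Section Main.
Variables (R : realType) (m : nat) (L : loop R m).
Hypothesis PS : prob_solvable L.

Definition Ex n (f : seq (choice L) -> R) : R :=
  \sum_(ks : n.-tuple (choice L)) weight L ks * f ks.



Lemma altprob_ge0 j k : 0 <= altprob L j k.
Proof.
case: PS => _ _ H3 H4 _; rewrite /altprob; case: ifP => [lt|_].
  by case/andP: (H3 j k lt).
by rewrite subr_ge0 ltW.
Qed.

Lemma sum_altprob j : \sum_k altprob L j k = 1.
Proof.
case: PS => H1 _ _ _ _.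
rewrite (bigID (fun k : 'I_(nalt L j) => (k.+1 < nalt L j)%N)) /=.
rewrite /altprob.
under eq_bigr => k -> do [].
have -> : \sum_(i < nalt L j | ~~ (i.+1 < nalt L j)%N)
   (if (i.+1 < nalt L j)%N then prb L j i
    else 1 - \sum_(k' < nalt L j | (k'.+1 < nalt L j)%N) prb L j k')
   = 1 - \sum_(k' < nalt L j | (k'.+1 < nalt L j)%N) prb L j k'.
  have Hn := H1 j.
  have Hp : ((nalt L j).-1 < nalt L j)%N by rewrite ltn_predL.
  rewrite (big_pred1 (Ordinal Hp)).
    by rewrite /= prednK // ltnn.
  move=> k /=; apply/negP/eqP => [|->]; last by rewrite /= prednK // ltnn.
  move=> /negP; rewrite -leqNgt => hk; apply: val_inj => /=.
  by apply/eqP; rewrite eqn_leq -ltnS prednK // ltn_ord -ltnS prednK.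
by rewrite addrC subrK.
Qed.

Lemma kprob_ge0 k : 0 <= kprob L k.
Proof. by apply: prodr_ge0 => j _; apply: altprob_ge0. Qed.

Lemma sum_kprob : \sum_k kprob L k = 1.
Proof.
rewrite /kprob -(@prod_sum_dffun _ _ _ (fun j k => altprob L j k)).
by apply: big1 => j _; apply: sum_altprob.
Qed.

Lemma weight_ge0 ks : 0 <= weight L ks.
Proof. by apply: prodr_ge0 => k _; apply: kprob_ge0. Qed.

Lemma weight_rcons ks k : weight L (rcons ks k) = weight L ks * kprob L k.
Proof. by rewrite /weight -cats1 big_cat big_seq1. Qed.

Lemma ExS n f : Ex n.+1 f = Ex n (fun ks => \sum_k kprob L k * f (rcons ks k)).
Proof.
rewrite /Ex (@sum_tuple_rcons _ _ _ (fun s => weight L s * f s)).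
apply: eq_bigr => ks _; rewrite big_distrr; apply: eq_bigr => k _.
by rewrite weight_rcons -mulrA.
Qed.

Lemma Ex1 n : Ex n (fun _ => 1) = 1.
Proof.
elim: n => [|n IH]; first by rewrite /Ex (@sum_tuple0 _ _ (fun s => weight L s * 1)) /weight big_nil mulr1.
rewrite ExS -[RHS]IH; apply: eq_bigr => ks _; congr (_ * _).
by under eq_bigr do rewrite mulr1; rewrite sum_kprob.
Qed.

Lemma Ex_le n f g : (forall ks, size ks = n -> 0 < weight L ks -> f ks <= g ks) ->
  Ex n f <= Ex n g.
Proof.
move=> H; apply: ler_sum => ks _.
have := weight_ge0 ks; rewrite le0r => /orP[/eqP->|wp]; first by rewrite !mul0r.
by rewrite ler_pM2l // H // size_tuple.
Qed.

Lemma Ex_eq n f g : (forall ks, size ks = n -> 0 < weight L ks -> f ks = g ks) ->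
  Ex n f = Ex n g.
Proof.
by move=> H; apply/le_anti; rewrite !Ex_le // => ks h1 h2; rewrite H.
Qed.

Lemma ExD n f g : Ex n (fun ks => f ks + g ks) = Ex n f + Ex n g.
Proof. by rewrite /Ex -big_split; apply: eq_bigr => ks _; rewrite mulrDr. Qed.

Lemma ExN n f : Ex n (fun ks => - f ks) = - Ex n f.
Proof. by rewrite /Ex -sumrN; apply: eq_bigr => ks _; rewrite mulrN. Qed.

Lemma Ex_ge0_eq0 n f : (forall ks, 0 <= f ks) -> Ex n f = 0 ->
  forall ks, size ks = n -> 0 < weight L ks -> f ks = 0.
Proof.
move=> H0 HE ks sz wp.
have := @psumr_eq0P _ _ predT (fun t : n.-tuple (choice L) => weight L t * f t).
move=> /(_ (fun t _ => mulr_ge0 (weight_ge0 t) (H0 t)) HE).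
have ksP : size ks == n by rewrite sz.
move=> /(_ (Tuple ksP) isT) /= /eqP; rewrite mulf_eq0 => /orP[/eqP w0|/eqP //].
by move: wp; rewrite w0 ltxx.
Qed.

Lemma prob_Ex n A : prob L n A = Ex n (fun ks => (A (run L ks))%:R).
Proof. by []. Qed.

Lemma prob_as1 n (A : seq (state m) -> bool) :
  (forall ks, size ks = n -> 0 < weight L ks -> A (run L ks)) -> prob L n A = 1.
Proof.
move=> H; rewrite prob_Ex; transitivity (Ex n (fun _ => 1)); last exact: Ex1.
by apply: Ex_eq => ks sz wp; rewrite H.
Qed.

Lemma condprob_as n (A B : seq (state m) -> bool) :
  prob L n B != 0 -> condprob L n A B = 1 ->
  forall ks, size ks = n -> 0 < weight L ks -> B (run L ks) -> A (run L ks).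
Proof.
move=> Bn0; rewrite /condprob => /(congr1 (fun x => x * prob L n B)).
rewrite mul1r mulfVK // => HE ks sz wp Bks.
have HE2 : Ex n (fun ks => (B (run L ks))%:R - ((A (run L ks) && B (run L ks)))%:R) = 0.
  by rewrite ExD ExN; rewrite /prob in HE; rewrite /Ex HE subrr.
have H0 : forall t : seq (choice L), (0:R) <= (B (run L t))%:R - (A (run L t) && B (run L t))%:R.
  move=> t; case: (B (run L t)); case: (A (run L t)) => /=; rewrite ?subrr ?subr0 // andbF subrr.
have := @Ex_ge0_eq0 n _ H0 HE2 ks sz wp.
rewrite Bks andbT; case: (A (run L ks)) => //= /eqP; by rewrite subr0 oner_eq0.
Qed.

End Main.
Arguments Ex {R m} L n f.


Section Run.
Variables (R : realType) (m : nat) (L : loop R m).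

Lemma final_cat s k1 k2 : final L s (k1 ++ k2) = final L (final L s k1) k2.
Proof. by elim: k1 s => //= k k1 IH s. Qed.

Lemma final_rcons s ks k : final L s (rcons ks k) = step L k (final L s ks).
Proof. by rewrite -cats1 final_cat. Qed.

Lemma step_frozen k s : ~~ (0 < evalp (G L) s) -> step L k s = s.
Proof. by rewrite /step => /negbTE ->. Qed.

Lemma final_frozen s ks : ~~ (0 < evalp (G L) s) -> final L s ks = s.
Proof. by elim: ks => //= k ks IH H; rewrite step_frozen // IH. Qed.

Lemma size_run ks : size (run L ks) = (size ks).+1.
Proof. by rewrite /run size_map size_iota. Qed.

Lemma st_run ks t : (t <= size ks)%N -> st L (run L ks) t = final L (s0 L) (take t ks).
Proof.
move=> ht; rewrite /st /run (nth_map 0%N); last by rewrite size_iota ltnS.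
by rewrite nth_iota ?ltnS.
Qed.

Lemma st_run_last ks : st L (run L ks) (size ks) = final L (s0 L) ks.
Proof. by rewrite st_run // take_size. Qed.

Lemma run_rcons ks k :
  run L (rcons ks k) = rcons (run L ks) (step L k (final L (s0 L) ks)).
Proof.
rewrite /run size_rcons.
have -> : iota 0 (size ks).+2 = rcons (iota 0 (size ks).+1) (size ks).+1.
  by rewrite -cats1 -addn1 iotaD.
rewrite map_rcons; apply: f_equal2.
  apply/eq_in_map => t; rewrite mem_iota add0n ltnS => /andP[_ ht].
  by rewrite -cats1 takel_cat.
by rewrite take_oversize ?size_rcons // final_rcons.
Qed.

Lemma take_run_rcons ks k : take (size ks).+1 (run L (rcons ks k)) = run L ks.
Proof. by rewrite run_rcons -cats1 takel_cat ?size_run // take_oversize ?size_run. Qed.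

Lemma guard_run ks t : (t <= size ks)%N ->
  guard L t (run L ks) = (0 < evalp (G L) (final L (s0 L) (take t ks))).
Proof. by move=> ht; rewrite /guard st_run. Qed.

Lemma guard_mono ks j t : (j <= t)%N -> (t <= size ks)%N ->
  guard L t (run L ks) -> guard L j (run L ks).
Proof.
move=> hjt hts; rewrite !guard_run ?(leq_trans hjt) //.
have -> : take t ks = take j ks ++ drop j (take t ks).
  by rewrite -{1}(cat_take_drop j (take t ks)) take_takel.
rewrite final_cat; apply: contraLR => H; by rewrite final_frozen.
Qed.

Lemma T_gt_run ks i : (i <= size ks)%N -> T_gt L i (run L ks) = guard L i (run L ks).
Proof.
move=> hi; apply/allP/idP => [H|H j]; first by apply: H; rewrite mem_iota add0n ltnS leqnn.
rewrite mem_iota add0n ltnS => /andP[_ hj]; exact: guard_mono H.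
Qed.

Lemma T_le_run ks i : (i <= size ks)%N -> T_le L i (run L ks) = ~~ guard L i (run L ks).
Proof.
move=> hi; rewrite -(@T_gt_run ks i hi) /T_le /T_gt -has_predC.
by apply: eq_has.
Qed.

End Run.


Section Cond.
Variables (R : realType) (m : nat) (L : loop R m).
Hypothesis PS : prob_solvable L.

Lemma sym_correct kap n s i :
  evalp (tnth (sym_upto L kap n) i) s = exec_upto L kap n s i.
Proof.
elim: n i => [|n IH] i /=.
  by rewrite tnth_mktuple /evalp mevalXU.
destruct (insub n : option 'I_m) as [j|]; last exact: IH.
rewrite tnth_mktuple ffunE; case: eqP => [Eij|_]; last exact: IH.
subst i.
rewrite /evalp mevalD mevalM mevalC comp_mpoly_meval.
have := IH j; rewrite /evalp => ->; congr (_ + _).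
by apply: meval_eq => k /=; have := IH k; rewrite /evalp => ->.
Qed.

Lemma branch_correct kap H s :
  evalp (branch_poly L kap H) s = evalp H (body L kap s).
Proof.
rewrite /branch_poly /evalp comp_mpoly_meval; apply: meval_eq => k.
exact: sym_correct.
Qed.

Lemma prob_atom_pos n ks : size ks = n -> 0 < weight L ks ->
  0 < prob L n (fun r => r == run L ks).
Proof.
move=> sz wp; have H0 : 0 <= prob L n (fun r => r == run L ks).
  by apply: sumr_ge0 => t _; apply: mulr_ge0; rewrite ?weight_ge0 ?ler0n.
rewrite lt_def H0 andbT; apply/eqP => HE.
have := @Ex_ge0_eq0 _ _ L PS n (fun t => ((run L t == run L ks))%:R) (fun t => ler0n _ _) HE ks sz wp.
by rewrite eqxx => /eqP; rewrite oner_eq0.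
Qed.

Lemma condexp_run n Y ks : size ks = n -> 0 < weight L ks ->
  condexp L n Y (run L ks) =
  \sum_k kprob L k * Y (rcons (run L ks) (step L k (final L (s0 L) ks))).
Proof.
move=> sz wp; set Phi := \sum_k _.
rewrite /condexp.
have -> : \sum_(ks0 : n.+1.-tuple (choice L) | take n.+1 (run L ks0) == run L ks)
      weight L ks0 * Y (run L ks0) =
   Ex L n.+1 (fun s => (take n.+1 (run L s) == run L ks)%:R * Y (run L s)).
  rewrite /Ex big_mkcond; apply: eq_bigr => t _.
  by case: ifP => _; rewrite ?mul1r ?mul0r ?mulr0.
rewrite ExS.
have -> : Ex L n (fun s => \sum_k kprob L k *
     ((take n.+1 (run L (rcons s k)) == run L ks)%:R * Y (run L (rcons s k))))
   = Ex L n (fun s => (run L s == run L ks)%:R * Phi).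
  apply: Ex_eq => // s szs _.
  case: (eqVneq (run L s) (run L ks)) => [E|NE].
    rewrite mul1r /Phi; apply: eq_bigr => k _.
    rewrite -szs take_run_rcons E eqxx mul1r run_rcons E.
    have -> : final L (s0 L) s = final L (s0 L) ks.
      by rewrite -st_run_last -[in RHS]st_run_last E szs sz.
    by [].
  rewrite mul0r; apply: big1 => k _.
  by rewrite -szs take_run_rcons (negbTE NE) mul0r mulr0.
have -> : Ex L n (fun s => (run L s == run L ks)%:R * Phi) =
          prob L n (fun r => r == run L ks) * Phi.
  by rewrite /Ex /prob big_distrl; apply: eq_bigr => t _; rewrite mulrA.
by rewrite mulrAC divff ?mul1r // gt_eqF // prob_atom_pos.
Qed.

End Cond.


Lemma RI (R : realFieldType) (a c y d : R) :
  0 < a -> 1 <= y -> `|d| <= c -> a * c <= 1/2 ->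
  (y - a * d)^-1 <= y^-1 + a * d * y^-1 ^+ 2 + 2 * (a * c) ^+ 2 * y^-1 ^+ 3.
Proof.
move=> a0 y1 dc ac.
have y0 : 0 < y by lra.
have w0 : 0 < y^-1 by rewrite invr_gt0.
have wy : y^-1 * y = 1 by rewrite mulVf // gt_eqF.
have w1 : y^-1 <= 1 by rewrite invf_le1.
have c0 : 0 <= c by apply: le_trans dc.
have [dl du] : - c <= d /\ d <= c by move: dc; rewrite ler_norml => /andP[].
set w := y^-1 in w0 wy w1 *.
have aw : 0 < a * w by apply: mulr_gt0.
have hu1 : a * w * (- c) <= a * w * d by rewrite ler_pM2l.
have hu2 : a * w * d <= a * w * c by rewrite ler_pM2l.
have hv : a * c * w <= 1/2.
  apply: le_trans ac; rewrite -[X in _ <= X]mulr1; apply: ler_wpM2l => //.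
  exact: mulr_ge0 (ltW a0) c0.
set u := a * d * w; set v := a * c * w.
have hv2 : v <= 1/2 by exact: hv.
have hu : - v <= u /\ u <= v.
  have e1 : - v = a * w * (- c) by rewrite /v; ring.
  have e2 : u = a * w * d by rewrite /u; ring.
  have e3 : v = a * w * c by rewrite /v; ring.
  by rewrite e1 e2 e3.
have key : 1 <= (1 + u + 2 * v ^+ 2) * (1 - u).
  case: hu => h1 h2.
  have k1 : 0 <= (v - u) * (v + u) by apply: mulr_ge0; lra.
  have k2 : 0 <= v ^+ 2 * (1 - 2 * u) by apply: mulr_ge0; [exact: sqr_ge0 | lra].
  have -> : (1 + u + 2 * v ^+ 2) * (1 - u) = 1 + (v - u) * (v + u) + v ^+ 2 * (1 - 2 * u) by ring.
  lra.
have yad : y - a * d = y * (1 - u).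
  rewrite /u mulrBr mulr1; congr (_ - _).
  by rewrite {1}(_ : a * d = a * d * (w * y)); [ring | rewrite wy mulr1].
have rhs : w + a * d * w ^+ 2 + 2 * (a * c) ^+ 2 * w ^+ 3 =
           w * (1 + u + 2 * v ^+ 2) by rewrite /u /v; ring.
have u1 : 0 < 1 - u by case: hu => h1 h2; lra.
rewrite rhs yad invfM -/w ler_pM2l //.
by rewrite -[X in X <= _]mul1r ler_pdivrMr.
Qed.

Lemma RI2 (R : realFieldType) (a c w D eps : R) :
  0 < a -> 0 < w -> w <= 1 -> D <= - eps -> 2 * a * c ^+ 2 <= eps ->
  w + a * D * w ^+ 2 + 2 * (a * c) ^+ 2 * w ^+ 3 <= w.
Proof.
move=> a0 w0 w1 hD he.
have h1 : a * D * w ^+ 2 <= a * (- eps) * w ^+ 2.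
  by rewrite ler_pM2r ?exprn_gt0 // ler_pM2l.
have h2 : 2 * (a * c) ^+ 2 * w ^+ 3 <= a * (2 * a * c ^+ 2) * w ^+ 2.
  have -> : 2 * (a * c) ^+ 2 * w ^+ 3 = a * (2 * a * c ^+ 2) * w ^+ 2 * w by ring.
  rewrite -[X in _ <= X]mulr1 ler_wpM2l //.
  by apply: mulr_ge0; [apply: mulr_ge0; [exact: ltW|] | exact: exprn_ge0 (ltW w0)];
     apply: mulr_ge0 => //; [apply: mulr_ge0 => //; exact: ltW | exact: sqr_ge0].
have h3 : a * (- eps) * w ^+ 2 + a * (2 * a * c ^+ 2) * w ^+ 2 <= 0.
  rewrite -mulrDl -mulrDr; apply: mulr_le0_ge0; last exact: sqr_ge0.
  by apply: mulr_ge0_le0; [exact: ltW | lra].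
lra.
Qed.


Section Repulse.
Variables (R : realType) (m : nat) (L : loop R m).
Hypothesis PS : prob_solvable L.
Variables (i0 : nat) (eps c K : R).
Hypothesis eps0 : 0 < eps.
Hypothesis K0 : 0 <= K.
Hypothesis Kc : K < c.

Local Notation Gv s := (evalp (G L) s).
Local Notation fin ks := (final L (s0 L) ks).

Hypothesis Hdrift : forall ks, (i0 <= size ks)%N -> 0 < weight L ks -> 0 < Gv (fin ks) ->
  \sum_k kprob L k * (Gv (fin ks) - Gv (body L k (fin ks))) <= - eps.
Hypothesis Hdiff : forall ks k, (i0 <= size ks)%N -> 0 < weight L ks -> 0 < Gv (fin ks) ->
  0 < kprob L k -> `|Gv (fin ks) - Gv (body L k (fin ks))| <= K.
Hypothesis Hpos : 0 < prob L i0 (guard L i0).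

Let c0 : 0 < c. Proof. exact: le_lt_trans K0 Kc. Qed.

Let a := Num.min (1 / (2 * c)) (eps / (2 * c ^+ 2)).

Let a0 : 0 < a.
Proof.
by rewrite lt_min; apply/andP; split; apply: divr_gt0 => //;
  rewrite ?mulr_gt0 ?exprn_gt0 ?ltr0n.
Qed.

Let ac : a * c <= 1 / 2.
Proof.
have h : a <= 1 / (2 * c) by rewrite ge_min lexx.
have -> : 1 / 2 = 1 / (2 * c) * c by field; rewrite gt_eqF.
by rewrite ler_pM2r.
Qed.

Let ac2 : 2 * a * c ^+ 2 <= eps.
Proof.
have h : a <= eps / (2 * c ^+ 2) by rewrite ge_min lexx orbT.
have -> : eps = eps / (2 * c ^+ 2) * (2 * c ^+ 2) by field; rewrite gt_eqF.
have -> : 2 * a * c ^+ 2 = a * (2 * c ^+ 2) by ring.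
by rewrite ler_pM2r // mulr_gt0 ?exprn_gt0.
Qed.

Let g0 (ks : seq (choice L)) := 0 < Gv (fin (take i0 ks)).

Let W (ks : seq (choice L)) : R := if g0 ks then (1 + a * Gv (fin ks))^-1 else 1.

Lemma g0_rcons ks k : (i0 <= size ks)%N -> g0 (rcons ks k) = g0 ks.
Proof. by move=> h; rewrite /g0 -cats1 takel_cat. Qed.

Lemma weight_rcons_pos ks k : 0 < weight L (rcons ks k) ->
  0 < weight L ks /\ 0 < kprob L k.
Proof.
rewrite weight_rcons => h.
have w0 := weight_ge0 PS ks; have k0 := kprob_ge0 PS k.
split; rewrite lt_def ?w0 ?k0 andbT; apply/eqP => e; move: h; by rewrite e ?mul0r ?mulr0 ltxx.
Qed.

Lemma Inv ks : (i0 <= size ks)%N -> 0 < weight L ks -> g0 ks -> - Gv (fin ks) < c.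
Proof.
elim/last_ind: ks => [|ks k IH] hs wp hg.
  by move: hg; rewrite /g0 take_oversize // => h; have := c0; lra.
case: (leqP i0 (size ks)) => hi.
  have [wp1 kp] := weight_rcons_pos wp.
  rewrite g0_rcons // in hg; have IH' := IH hi wp1 hg.
  rewrite final_rcons /step; case: ifP => hG //.
  have := Hdiff hi wp1 hG kp; rewrite ler_norml => /andP[_ h2]. move: (Gv (fin ks)) (Gv (body L k (fin ks))) h2 hG => x z h2x hGx. have := Kc. lra.
have e : i0 = size (rcons ks k) by apply/eqP; rewrite eqn_leq hs size_rcons.
by move: hg; rewrite /g0 e take_size => h; have := c0; lra.
Qed.

Lemma SM ks : (i0 <= size ks)%N -> 0 < weight L ks ->
  \sum_k kprob L k * W (rcons ks k) <= W ks.
Proof.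
move=> hs wp; rewrite /W; case: ifP => hg; last first.
  under eq_bigr => k _ do rewrite g0_rcons // hg mulr1.
  by rewrite sum_kprob.
under eq_bigr => k _ do rewrite g0_rcons // hg final_rcons.
set s := fin ks.
case: (boolP (0 < Gv s)) => hG; last first.
  under eq_bigr => k _ do rewrite step_frozen //.
  by rewrite -big_distrl /= sum_kprob // mul1r.
rewrite /step hG.
set y := 1 + a * Gv s.
have y1 : 1 <= y by rewrite /y; have := a0; nra.
set d := fun k => Gv s - Gv (body L k s).
have H1 : forall k, kprob L k * (1 + a * Gv (body L k s))^-1 <=
   kprob L k * (y^-1 + a * d k * y^-1 ^+ 2 + 2 * (a * c) ^+ 2 * y^-1 ^+ 3).
  move=> k; have := kprob_ge0 PS k; rewrite le0r => /orP[/eqP->|kp].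
    by rewrite !mul0r.
  rewrite ler_pM2l //.
  have -> : 1 + a * Gv (body L k s) = y - a * d k by rewrite /y /d; ring.
  apply: RI => //; apply: le_trans (ltW Kc); exact: Hdiff.
apply: le_trans (ler_sum _ (fun k _ => H1 k)) _.
have -> : \sum_k kprob L k * (y^-1 + a * d k * y^-1 ^+ 2 + 2 * (a * c) ^+ 2 * y^-1 ^+ 3)
   = y^-1 + a * (\sum_k kprob L k * d k) * y^-1 ^+ 2 + 2 * (a * c) ^+ 2 * y^-1 ^+ 3.
  have -> : y^-1 + a * (\sum_k kprob L k * d k) * y^-1 ^+ 2 + 2 * (a * c) ^+ 2 * y^-1 ^+ 3
     = (\sum_k kprob L k) * (y^-1 + 2 * (a * c) ^+ 2 * y^-1 ^+ 3)
       + (\sum_k kprob L k * d k) * (a * y^-1 ^+ 2).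
    by rewrite sum_kprob // mul1r; ring.
  rewrite big_distrl big_distrl -big_split /=; apply: eq_bigr => k _; ring.
apply: RI2 (Hdrift hs wp hG) ac2 => //; first by rewrite invr_gt0; lra.
by rewrite invf_le1 //; lra.
Qed.

Lemma Super n : (i0 <= n)%N -> Ex L n W <= Ex L i0 W.
Proof.
move=> /subnK <-; elim: (n - i0)%N => [|t IH] //.
rewrite addSn ExS; apply: le_trans IH; apply: (Ex_le PS) => ks hs wp.
by apply: SM => //; rewrite hs leq_addl.
Qed.

Lemma pos1 ks : (i0 <= size ks)%N -> 0 < weight L ks -> g0 ks ->
  0 < 1 + a * Gv (fin ks).
Proof.
move=> hs wp hg; have hi := Inv hs wp hg.
have h1 : a * (- Gv (fin ks)) < a * c by rewrite ltr_pM2l.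
have := ac; move: h1; move: (Gv (fin ks)) (a * c) => x z; rewrite mulrN => h1 h2.
lra.
Qed.

Lemma Lower n ks : (i0 <= n)%N -> size ks = n -> 0 < weight L ks ->
  (~~ guard L n (run L ks))%:R <= W ks.
Proof.
move=> hn hs wp; rewrite /W; case: ifP => hg; last by case: (~~ _).
have hi : (i0 <= size ks)%N by rewrite hs.
have p1 := pos1 hi wp hg.
rewrite guard_run ?hs // -hs take_size.
case: (boolP (0 < Gv (fin ks))) => hG /=; first by rewrite ltW // invr_gt0.
rewrite invf_ge1 //.
have : a * Gv (fin ks) <= 0 by rewrite pmulr_rle0 // leNgt.
move: (a * Gv (fin ks)) => x; lra.
Qed.

Let delta := Ex L i0 (fun ks => (g0 ks)%:R * (1 - (1 + a * Gv (fin (take i0 ks)))^-1)).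

Lemma ExW : Ex L i0 W = 1 - delta.
Proof.
rewrite /delta.
transitivity (Ex L i0 (fun ks => 1 + - ((g0 ks)%:R * (1 - (1 + a * Gv (fin (take i0 ks)))^-1)))).
  apply: (Ex_eq PS) => ks hs wp.
  rewrite /W -hs take_size; case: (g0 ks); rewrite /= ?mul1r ?mul0r; ring.
by rewrite ExD ExN Ex1.
Qed.

Lemma delta_pos : 0 < delta.
Proof.
have hpos : forall ks, 0 <= (g0 ks)%:R * (1 - (1 + a * Gv (fin (take i0 ks)))^-1).
  move=> ks; case: (boolP (g0 ks)) => hg; rewrite ?mul0r //= mul1r subr_ge0.
  rewrite invf_le1; last by move: hg; rewrite /g0; have := a0; move: (Gv _) => x; nra.
  by move: hg; rewrite /g0; have := a0; move: (Gv _) => x; nra.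
have d0 : 0 <= delta by apply: sumr_ge0 => t _; apply: mulr_ge0; rewrite ?weight_ge0.
rewrite lt_def d0 andbT; apply/eqP => d00.
have Z := Ex_ge0_eq0 PS hpos d00.
move: Hpos; rewrite prob_Ex.
have -> : Ex L i0 (fun ks => (guard L i0 (run L ks))%:R) = Ex L i0 (fun _ => 0).
  apply: (Ex_eq PS) => ks hs wp; rewrite guard_run ?hs // -hs take_size.
  have := Z ks hs wp; rewrite /g0 -hs take_size.
  case: (boolP (0 < Gv (fin ks))) => hG /=; last by rewrite mul0r.
  rewrite mul1r => /eqP; rewrite subr_eq0 => /eqP h.
  have : 1 + a * Gv (fin ks) = 1 by rewrite -[LHS]invrK -h invr1.
  have := a0; move: (Gv _) hG => x hx; nra.
by rewrite /Ex big1 ?ltxx // => t _; rewrite mulr0.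
Qed.

Theorem notAST : ~ AST L.
Proof.
move=> HA; have [N HN] := HA delta delta_pos.
set i := maxn N i0.
have := HN i (leq_maxl _ _).
have hi0 : (i0 <= i)%N by apply: leq_maxr.
have : prob L i (T_le L i) <= 1 - delta.
  rewrite -ExW; apply: le_trans (Super hi0); rewrite prob_Ex.
  apply: (Ex_le PS) => ks hs wp; rewrite T_le_run ?hs //.
  exact: Lower.
move: (prob _ _ _) => x; lra.
Qed.

End Repulse.

Unset Implicit Arguments.
Set Strict Implicit.


Lemma st_rcons_last (R : realType) (m : nat) (L : loop R m) ks x :
  st L (rcons (run L ks) x) (size ks).+1 = x.
Proof. by rewrite /st nth_rcons size_run ltnn eqxx. Qed.

Lemma st_rcons_prev (R : realType) (m : nat) (L : loop R m) ks x :
  st L (rcons (run L ks) x) (size ks) = final L (s0 L) ks.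
Proof. by rewrite /st nth_rcons size_run ltnSn -/(st L _ _) st_run_last. Qed.

Lemma prob_ext (R : realType) (m : nat) (L : loop R m) n (A B : seq (state m) -> bool) :
  (forall r, A r = B r) -> prob L n A = prob L n B.
Proof. by move=> H; apply: eq_bigr => t _; rewrite H. Qed.

Lemma prob_T_gt (R : realType) (m : nat) (L : loop R m) i :
  prob L i (T_gt L i) = prob L i (guard L i).
Proof. by apply: eq_bigr => t _; rewrite T_gt_run // size_tuple. Qed.

Lemma evalpN (R : realType) (m : nat) (p : {mpoly R[m]}) s : evalp (- p) s = - evalp p s.
Proof. by rewrite /evalp mevalN. Qed.

Lemma evalpD (R : realType) (m : nat) (p q : {mpoly R[m]}) s :
  evalp (p + q) s = evalp p s + evalp q s.
Proof. by rewrite /evalp mevalD. Qed.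

Lemma is_branch_of (R : realType) (m : nat) (L : loop R m) (PS : prob_solvable L) H kap :
  0 < kprob L kap -> is_branch L H (branch_poly L kap H).
Proof.
move=> kp; rewrite /is_branch (bigD1 kap) ?eqxx //=.
apply: (lt_le_trans kp); rewrite lerDl.
by apply: sumr_ge0 => k _; apply: kprob_ge0.
Qed.

Theorem mainTheorem6 (R : realType) (m : nat) (L : loop R m) (u : nat -> R) :
  prob_solvable L ->
  (* (i) *)
  upper_bounding L (Eexp L) u ->
  (exists2 kappa : R, 0 < kappa &
     exists i1 : nat, forall i : nat, (i1 <= i)%N -> u i <= - kappa) ->
  (* (ii) *)
  (forall i : nat, 0 < prob L i (guard L i)) ->
  (* (iii) *)
  (exists c : {mpoly R[m]} -> nat -> R,
     (forall B, is_branch L (- G L) B ->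
        absolute_bounding L (fun i r => evalp (B + G L) (st L r i)) (c B)) /\
     exists (C : R) (i2 : nat), forall B, is_branch L (- G L) B ->
        forall i : nat, (i2 <= i)%N -> c B i <= C) ->
  (* conclusion: M := -G satisfies the relaxed Repulsing-AST-rule, and L is not AST *)
  (exists (i0 : nat) (eps c : R),
     [/\ 0 < eps, 0 < c,
         0 < prob L i0 (fun r => evalp (- G L) (st L r i0) < 0)
       & forall i : nat, (i0 <= i)%N ->
         [/\ prob L i (fun r => ~~ guard L i r ==> (0 <= evalp (- G L) (st L r i))) = 1,
             prob L i (fun r => guard L i r ==>
                (condexp L i (fun r' => evalp (- G L) (st L r' i.+1)
                                        - evalp (- G L) (st L r' i)) r <= - eps)) = 1
           & prob L i.+1 (fun r => `|evalp (- G L) (st L r i.+1)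
                                      - evalp (- G L) (st L r i)| < c) = 1]])
  /\ ~ AST L.
Proof.
move=> PS [_ _ [alpha alpha0 [N1 HN1]]] [kappa kappa0 [i1 Hu]] Hg
  [cB [HcB [C [i2 HC]]]].
have guard_last : forall ks, guard L (size ks) (run L ks) = (0 < evalp (G L) (final L (s0 L) ks)).
  by move=> ks; rewrite guard_run // take_size.
have Hdrift : forall ks, (maxn N1 i1 <= size ks)%N -> 0 < weight L ks ->
    0 < evalp (G L) (final L (s0 L) ks) ->
    \sum_k kprob L k * (evalp (G L) (final L (s0 L) ks)
        - evalp (G L) (body L k (final L (s0 L) ks))) <= - (alpha * kappa).
  move=> ks hs wp hG; rewrite geq_max in hs; case/andP: hs => hN hi.
  have hp : prob L (size ks) (T_gt L (size ks)) != 0 by rewrite prob_T_gt gt_eqF.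
  have := condprob_as PS hp (HN1 _ hN) (erefl _) wp.
  rewrite T_gt_run // guard_last => /(_ hG).
  rewrite /Eexp (condexp_run PS _ (erefl _) wp) => h.
  have := Hu _ hi => hu.
  have e : \sum_k kprob L k * (evalp (G L) (final L (s0 L) ks)
        - evalp (G L) (body L k (final L (s0 L) ks))) =
      \sum_k kprob L k * (- evalp (G L) (st L (rcons (run L ks)
          (step L k (final L (s0 L) ks))) (size ks).+1) +
          evalp (G L) (st L (rcons (run L ks) (step L k (final L (s0 L) ks))) (size ks))).
    apply: eq_bigr => k _; rewrite st_rcons_last st_rcons_prev /step hG.
    by rewrite addrC.
  rewrite e; apply: le_trans h _.
  rewrite -mulrN ler_pM2l //.
have Hdiff1 : forall kap, exists K, exists N, 0 <= K /\ forall ks, (N <= size ks)%N ->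
    0 < weight L ks -> 0 < evalp (G L) (final L (s0 L) ks) -> 0 < kprob L kap ->
    `|evalp (G L) (final L (s0 L) ks) - evalp (G L) (body L kap (final L (s0 L) ks))| <= K.
  move=> kap; case: (boolP (0 < kprob L kap)) => kp; last first.
    by exists 0, 0%N; split => // ks _ _ _ kp'; move: kp; rewrite kp'.
  have isb := @is_branch_of _ _ L PS (- G L) kap kp.
  have [_ _ [al al0 [NB HNB]]] := HcB _ isb.
  exists (al * `|C|), (maxn NB i2); split; first by rewrite mulr_ge0 // ltW.
  move=> ks hs wp hG _; rewrite geq_max in hs; case/andP: hs => hN hi.
  have hp : prob L (size ks) (T_gt L (size ks)) != 0 by rewrite prob_T_gt gt_eqF.
  have := condprob_as PS hp (HNB _ hN) (erefl _) wp.
  rewrite T_gt_run // guard_last => /(_ hG).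
  rewrite st_run_last evalpD branch_correct evalpN /body => h.
  rewrite addrC in h; apply: le_trans h _.
  rewrite ler_pM2l //; apply: le_trans (HC _ isb _ hi) _; exact: ler_norm.
have [K [Nd [K0 HK]]] : exists K, exists N, 0 <= K /\ forall kap ks, (N <= size ks)%N ->
    0 < weight L ks -> 0 < evalp (G L) (final L (s0 L) ks) -> 0 < kprob L kap ->
    `|evalp (G L) (final L (s0 L) ks) - evalp (G L) (body L kap (final L (s0 L) ks))| <= K.
  have : forall l : seq (choice L), exists K, exists N, 0 <= K /\ forall kap, kap \in l ->
    forall ks, (N <= size ks)%N ->
    0 < weight L ks -> 0 < evalp (G L) (final L (s0 L) ks) -> 0 < kprob L kap ->
    `|evalp (G L) (final L (s0 L) ks) - evalp (G L) (body L kap (final L (s0 L) ks))| <= K.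
    elim => [|k l [K [N [K0 IH]]]]; first by exists 0, 0%N.
    have [K1 [N1' [K10 H1]]] := Hdiff1 k.
    exists (Num.max K K1), (maxn N N1'); split; first by rewrite le_max K0.
    move=> kap; rewrite in_cons => /orP[/eqP->|hl] ks hs; rewrite geq_max in hs;
      case/andP: hs => hs1 hs2 wp hG kp.
      by apply: le_trans (H1 _ hs2 wp hG kp) _; rewrite le_max lexx orbT.
    by apply: le_trans (IH _ hl _ hs1 wp hG kp) _; rewrite le_max lexx.
  move=> /(_ (enum (choice L))) [K [N [K0 H]]]; exists K, N; split => // kap.
  by apply: H; rewrite mem_enum.
set i0 := maxn (maxn N1 i1) Nd.
have Hdrift' : forall ks, (i0 <= size ks)%N -> 0 < weight L ks ->
    0 < evalp (G L) (final L (s0 L) ks) ->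
    \sum_k kprob L k * (evalp (G L) (final L (s0 L) ks)
        - evalp (G L) (body L k (final L (s0 L) ks))) <= - (alpha * kappa).
  by move=> ks hs; apply: Hdrift; apply: leq_trans hs; apply: leq_maxl.
have Hdiff' : forall ks kap, (i0 <= size ks)%N ->
    0 < weight L ks -> 0 < evalp (G L) (final L (s0 L) ks) -> 0 < kprob L kap ->
    `|evalp (G L) (final L (s0 L) ks) - evalp (G L) (body L kap (final L (s0 L) ks))| <= K.
  by move=> ks kap hs; apply: HK; apply: leq_trans hs; apply: leq_maxr.
have eps0 : 0 < alpha * kappa by apply: mulr_gt0.
have Kc : K < K + 1 by rewrite ltrDl.
split; last exact: (notAST PS eps0 K0 Kc Hdrift' Hdiff' (Hg i0)).
exists i0, (alpha * kappa), (K + 1); split => //.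
- exact: le_lt_trans K0 Kc.
- rewrite (@prob_ext _ _ L i0 _ (guard L i0)) // => r.
  by rewrite evalpN oppr_lt0.
move=> i hi; split.
- apply: prob_as1 => // ks _ _.
  by rewrite /guard evalpN oppr_ge0 -leNgt implybb.
- apply: prob_as1 => // ks hs wp; apply/implyP; rewrite -hs guard_last => hG.
  rewrite (condexp_run PS _ (erefl _) wp).
  apply: le_trans (Hdrift' ks _ wp hG); last by rewrite hs.
  apply: ler_sum => k _; rewrite st_rcons_last st_rcons_prev /step hG !evalpN.
  by rewrite opprK addrC.
- apply: prob_as1 => // ks hs wp.
  case/lastP: ks hs wp => [//|ks k] hs wp.
  move: hs; rewrite size_rcons => -[hs].
  have [wp1 kp] := weight_rcons_pos PS wp.
  have hi' : (i0 <= size ks)%N by rewrite hs.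
  rewrite run_rcons -hs st_rcons_last st_rcons_prev !evalpN /step.
  case: ifP => hG; last by rewrite subrr normr0 (le_lt_trans K0 Kc).
  have := Hdiff' ks k hi' wp1 hG kp.
  rewrite opprK addrC => h; apply: le_lt_trans h _; exact: Kc.
Qed.
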